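(* Let $\mathcal{X}$ and $\mathcal{Y}$ be finite sets, let $\Pr$ be a probability distribution on $\mathcal{X}$, let $\delta:\mathcal{X}\times\mathcal{Y}\to\mathbb{R}$, and let $\bar\pi,\pi_1,\dots,\pi_m$ be stochastic policies, each $\pi_i$ having support for $\bar\pi$ and satisfying $\sigma^2_\delta(\bar\pi\|\pi_i)>0$. Let $\mathcal{D}=\bigcup_{i=1}^m\mathcal{D}^i$ be a log dataset in which, for each $i$, $\mathcal{D}^i$ consists of $n_i$ samples $(x^i_j,y^i_j,\delta^i_j,p^i_j)$, $j=1,\dots,n_i$, with $x^i_j\sim\Pr$, $y^i_j\sim\pi_i(\cdot\mid x^i_j)$, $\delta^i_j=\delta(x^i_j,y^i_j)$, $p^i_j=\pi_i(y^i_j\mid x^i_j)$, all draws independent. For $\lambda=(\lambda_1,\dots,\lambda_m)$ with $\lambda_i\ge0$ and $\sum_i\lambda_in_i=1$ let $$\hat U_\lambda(\bar\pi)=\sum_{i=1}^m\lambda_i\sum_{j=1}^{n_i}\frac{\delta^i_j\,\bar\pi(y^i_j\mid x^i_j)}{p^i_j},$$ and let $\hat U_{weight}(\bar\pi)$ denote $\hat U_\lambda(\bar\pi)$ with $\lambda_i=\lambda_i^*=\Big(\sigma^2_\delta(\bar\pi\|\pi_i)\sum_{j=1}^m\frac{n_j}{\sigma^2_\delta(\bar\pi\|\pi_j)}\Big)^{-1}$. Then for every such $\lambda$, $$\mathrm{Var}_{\mathcal{D}}[\hat U_{weight}(\bar\pi)]=\frac{1}{\sum_{i=1}^m\frac{n_i}{\sigma^2_\delta(\bar\pi\|\pi_i)}}\le\mathrm{Var}_{\mathcal{D}}[\hat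 U_\lambda(\bar\pi)].$$
   Context: A stochastic policy $\pi$ assigns to each $x\in\mathcal{X}$ a probability distribution $\pi(\cdot\mid x)$ on $\mathcal{Y}$. The utility is $U(\pi)=\sum_{x,y}\Pr(x)\pi(y\mid x)\delta(x,y)$. A policy $\pi$ has support for $\pi'$ if $\delta(x,y)\pi'(y\mid x)\neq0$ implies $\pi(y\mid x)>0$ for all $x,y$. For $\pi$ having support for $\bar\pi$, the divergence is $\sigma^2_\delta(\bar\pi\|\pi)=\mathrm{Var}_{x\sim\Pr,\,y\sim\pi(\cdot\mid x)}\big[\delta(x,y)\bar\pi(y\mid x)/\pi(y\mid x)\big]=\sum_{x,y}\frac{(\delta(x,y)\bar\pi(y\mid x))^2}{\pi(y\mid x)}\Pr(x)-U(\bar\pi)^2$. Variances are over the random draw of $\mathcal{D}$. *)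

(* Defs.v *)
From HB Require Import structures.
From mathcomp Require Import all_boot all_order all_algebra.
Set Implicit Arguments. Unset Strict Implicit. Unset Printing Implicit Defensive.
Import Order.TTheory GRing.Theory Num.Theory.
Local Open Scope ring_scope.

Section Defs.
Variables (R : realFieldType) (X Y : finType).

Definition is_distr (P : X -> R) : Prop :=
  (forall x, 0 <= P x) /\ \sum_x P x = 1.

(* A stochastic policy: pi x y = pi(y | x). *)
Definition is_policy (pi : X -> Y -> R) : Prop :=
  forall x, (forall y, 0 <= pi x y) /\ \sum_y pi x y = 1.

Definition utility (P : X -> R) (delta : X -> Y -> R) (pi : X -> Y -> R) : R :=
  \sum_x \sum_y P x * pi x y * delta x y.

Definition has_support (delta : X -> Y -> R) (pi pi' : X -> Y -> R) : Prop :=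
  forall x y, delta x y * pi' x y != 0 -> 0 < pi x y.

Definition divergence (P : X -> R) (delta : X -> Y -> R) (pibar pi : X -> Y -> R) : R :=
  let w x y := delta x y * pibar x y / pi x y in
  let mu := \sum_x \sum_y P x * pi x y * w x y in
  \sum_x \sum_y P x * pi x y * (w x y - mu) ^+ 2.

(* Log datasets: m loggers, logger i contributes n i samples.
   A dataset assigns to every sample index (i, j) a pair (x, y);
   delta^i_j and p^i_j are determined by it. *)
Definition sample_idx (m : nat) (n : 'I_m -> nat) : finType :=
  {i : 'I_m & 'I_(n i)}.

Definition sidx (m : nat) (n : 'I_m -> nat) (i : 'I_m) (j : 'I_(n i)) :
  sample_idx n := Tagged (fun i => 'I_(n i)) j.

Definition dataset (m : nat) (n : 'I_m -> nat) : finType :=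
  {ffun sample_idx n -> (X * Y)%type}.

Definition data_prob (P : X -> R) (m : nat) (n : 'I_m -> nat)
  (pis : 'I_m -> X -> Y -> R) (D : dataset n) : R :=
  \prod_(s : sample_idx n) (P (D s).1 * pis (tag s) (D s).1 (D s).2).

Definition data_E (P : X -> R) (m : nat) (n : 'I_m -> nat)
  (pis : 'I_m -> X -> Y -> R) (f : dataset n -> R) : R :=
  \sum_(D : dataset n) data_prob P pis D * f D.

Definition data_Var (P : X -> R) (m : nat) (n : 'I_m -> nat)
  (pis : 'I_m -> X -> Y -> R) (f : dataset n -> R) : R :=
  data_E P pis (fun D => (f D - data_E P pis f) ^+ 2).

Definition U_lambda (delta : X -> Y -> R) (pibar : X -> Y -> R) (m : nat)
  (n : 'I_m -> nat) (pis : 'I_m -> X -> Y -> R) (lambda : 'I_m -> R)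
  (D : dataset n) : R :=
  \sum_(i < m) lambda i *
    \sum_(j < n i)
      (let x := (D (sidx j)).1 in let y := (D (sidx j)).2 in
       delta x y * pibar x y / pis i x y).

Definition lambda_star (P : X -> R) (delta : X -> Y -> R) (pibar : X -> Y -> R)
  (m : nat) (n : 'I_m -> nat) (pis : 'I_m -> X -> Y -> R) (i : 'I_m) : R :=
  (divergence P delta pibar (pis i) *
     \sum_(k < m) ((n k)%:R / divergence P delta pibar (pis k)))^-1.

End Defs.

(* Main.v *)
Require Import Defs.
From HB Require Import structures.
From Stdlib Require Import FunctionalExtensionality.
From mathcomp Require Import ring lra.
From mathcomp Require Import all_boot all_order all_algebra.
Import Order.TTheory GRing.Theory Num.Theory.
Local Open Scope ring_scope.

Section Prod.
Variables (R : realFieldType) (I T : finType) (q : I -> T -> R).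
Hypothesis q1 : forall s, \sum_t q s t = 1.
Definition pE (F : {ffun I -> T} -> R) := \sum_(D : {ffun I -> T}) (\prod_s q s (D s)) * F D.

Lemma pE_prod (h : I -> T -> R) :
  pE (fun D => \prod_s h s (D s)) = \prod_s \sum_t q s t * h s t.
Proof.
rewrite /pE bigA_distr_bigA; apply: eq_bigr => D _; by rewrite big_split.
Qed.

Lemma pE_single s (g : T -> R) : pE (fun D => g (D s)) = \sum_t q s t * g t.
Proof.
have -> : (fun D : {ffun I -> T} => g (D s)) =
  (fun D => \prod_k (if k == s then g (D k) else 1)).
  apply: functional_extensionality => D; rewrite (bigD1 s) //= eqxx big1 ?mulr1 //.
  by move=> k /negPf ->.
rewrite (pE_prod (fun k t => if k == s then g t else 1)).
rewrite (bigD1 s) //= [X in _ * X]big1 ?mulr1; first by apply: eq_bigr => t _; rewrite eqxx.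
move=> k /negPf kn; rewrite (eq_bigr (q k)) ?q1 // => t _; by rewrite kn mulr1.
Qed.

Lemma pE_pair s r (g h : T -> R) : s != r ->
  pE (fun D => g (D s) * h (D r)) = (\sum_t q s t * g t) * (\sum_t q r t * h t).
Proof.
move=> sr.
have -> : (fun D : {ffun I -> T} => g (D s) * h (D r)) =
  (fun D => \prod_k (if k == s then g (D k) else if k == r then h (D k) else 1)).
  apply: functional_extensionality => D; rewrite (bigD1 s) //= eqxx (bigD1 r) //=; last by rewrite eq_sym.
  rewrite eq_sym (negPf sr) eqxx big1 ?mulr1 //.
  by move=> k /andP [/negPf -> /negPf ->].
rewrite (pE_prod (fun k t => if k == s then g t else if k == r then h t else 1)).
rewrite (bigD1 s) //= (bigD1 r) /=; last by rewrite eq_sym.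
rewrite [X in _ * (_ * X)]big1 ?mulr1.
  congr (_ * _); apply: eq_bigr => t _; first by rewrite eqxx.
  by rewrite eq_sym (negPf sr) eqxx.
move=> k /andP [/negPf kr /negPf ks]; rewrite (eq_bigr (q k)) ?q1 // => t _.
by rewrite kr ks mulr1.
Qed.

Lemma pE_sum (J : finType) (F : J -> {ffun I -> T} -> R) :
  pE (fun D => \sum_j F j D) = \sum_j pE (F j).
Proof.
rewrite /pE exchange_big /=; apply: eq_bigr => D _; by rewrite mulr_sumr.
Qed.

Lemma pE_sub F G : pE (fun D => F D - G D) = pE F - pE G.
Proof. rewrite /pE -sumrB; apply: eq_bigr => D _; by rewrite mulrBr. Qed.

Lemma pE_const c : pE (fun _ => c) = c.
Proof.
rewrite /pE -mulr_suml -bigA_distr_bigA big1 ?mul1r //.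
Qed.

Lemma pE_var (f : I -> T -> R) :
  pE (fun D => (\sum_s f s (D s) - pE (fun D => \sum_s f s (D s))) ^+ 2)
  = \sum_s \sum_t q s t * (f s t - \sum_t q s t * f s t) ^+ 2.
Proof.
set c := fun s => \sum_t q s t * f s t.
have Ec : pE (fun D => \sum_s f s (D s)) = \sum_s c s.
  rewrite pE_sum; apply: eq_bigr => s _; exact: pE_single.
rewrite Ec.
have Eg : forall s, \sum_t q s t * (f s t - c s) = 0.
  move=> s; under eq_bigr do rewrite mulrBr.
  by rewrite sumrB -mulr_suml q1 mul1r subrr.
have -> : (fun D : {ffun I -> T} => (\sum_s f s (D s) - \sum_s c s) ^+ 2) =
   (fun D => \sum_s \sum_r (f s (D s) - c s) * (f r (D r) - c r)).
  apply: functional_extensionality => D; rewrite -sumrB expr2 mulr_suml; apply: eq_bigr => s _.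
  by rewrite mulr_sumr.
rewrite pE_sum; apply: eq_bigr => s _.
rewrite pE_sum (bigD1 s) //= big1 ?addr0.
  rewrite (pE_single s (fun t => (f s t - c s) * (f s t - c s))).
  by apply: eq_bigr => t _; rewrite expr2.
move=> r rs; rewrite (@pE_pair s r (fun t => f s t - c s) (fun t => f r t - c r)).
  by rewrite Eg mul0r.
by rewrite eq_sym.
Qed.
End Prod.
Arguments pE {R I T}.
Arguments pE_var {R I T q}.

Lemma sum_tag (R : realFieldType) m (n : 'I_m -> nat) (G : forall i, 'I_(n i) -> R) :
  \sum_(s : sample_idx n) G (tag s) (tagged s) = \sum_i \sum_(j < n i) G i j.
Proof.
rewrite (sig_big_dep xpredT (fun _ => xpredT) G); by apply: eq_bigl.
Qed.

Lemma var_formula (R : realFieldType) (X Y : finType)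
  (P : X -> R) (delta : X -> Y -> R) (pibar : X -> Y -> R)
  (m : nat) (pis : 'I_m -> X -> Y -> R) (n : 'I_m -> nat) :
  is_distr P -> (forall i, is_policy (pis i)) ->
  forall lambda : 'I_m -> R,
  @data_Var R X Y P m n pis (U_lambda delta pibar pis lambda) =
  \sum_i (n i)%:R * (lambda i ^+ 2 * divergence P delta pibar (pis i)).
Proof.
move=> [_ HP] Hpol lambda.
pose q := fun (s : sample_idx n) (t : (X * Y)%type) => P t.1 * pis (tag s) t.1 t.2.
have q1 : forall s, \sum_t q s t = 1.
  move=> s; rewrite /q -(pair_bigA _ (fun x y => P x * pis (tag s) x y)) /=.
  rewrite -[RHS]HP; apply: eq_bigr => x _; by rewrite -mulr_sumr (proj2 (Hpol _ x)) mulr1.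
pose w := fun i (t : (X * Y)%type) => delta t.1 t.2 * pibar t.1 t.2 / pis i t.1 t.2.
pose f := fun (s : sample_idx n) t => lambda (tag s) * w (tag s) t.
have HU : U_lambda delta pibar pis lambda = (fun D => \sum_s f s (D s)).
  apply: functional_extensionality => D; rewrite /U_lambda.
  rewrite [RHS](eq_bigr (fun s => f (sidx (tagged s)) (D (sidx (tagged s))))); last by case.
  rewrite (@sum_tag _ m n (fun i j => f (sidx j) (D (sidx j)))).
  apply: eq_bigr => i _; rewrite mulr_sumr; by apply: eq_bigr.
rewrite HU.
have -> : data_Var P pis (fun D => \sum_s f s (D s)) =
   pE q (fun D => (\sum_s f s (D s) - pE q (fun D => \sum_s f s (D s))) ^+ 2) by [].
rewrite (pE_var q1).
set H := fun i => lambda i ^+ 2 * divergence P delta pibar (pis i).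
have -> : \sum_i (n i)%:R * H i = \sum_i \sum_(j < n i) H i.
  by apply: eq_bigr => i _; rewrite sumr_const card_ord mulr_natl.
rewrite -(@sum_tag _ m n (fun i _ => H i)).
apply: eq_bigr => s _.
rewrite /H /f /q /w /divergence !pair_bigA /=.
move: (tag s) => i.
set mu := \sum_(t : (X * Y)%type) P t.1 * pis i t.1 t.2 * (delta t.1 t.2 * pibar t.1 t.2 / pis i t.1 t.2).
have -> : \sum_(t : (X * Y)%type) P t.1 * pis i t.1 t.2 * (lambda i * (delta t.1 t.2 * pibar t.1 t.2 / pis i t.1 t.2)) = lambda i * mu.
  by rewrite /mu mulr_sumr; apply: eq_bigr => t _; rewrite mulrCA.
rewrite [RHS]mulr_sumr; apply: eq_bigr => t _.
by rewrite -mulrBr exprMn mulrCA.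
Qed.

Lemma alg (R : realFieldType) m (n : 'I_m -> nat) (sg lambda : 'I_m -> R) :
  (forall i, 0 < sg i) -> \sum_i lambda i * (n i)%:R = 1 ->
  \sum_i (n i)%:R * ((sg i * (\sum_i (n i)%:R / sg i))^-1 ^+ 2 * sg i) = (\sum_i (n i)%:R / sg i)^-1 /\
  (\sum_i (n i)%:R / sg i)^-1 <= \sum_i (n i)%:R * (lambda i ^+ 2 * sg i).
Proof.
move=> Hpos Hsum; set S' := \sum_(i < m) (n i)%:R / sg i.
have sne : forall i, sg i != 0 by move=> i; rewrite (gt_eqF (Hpos i)).
have Vge0 : 0 <= \sum_i (n i)%:R * (lambda i ^+ 2 * sg i).
  apply: sumr_ge0 => i _; apply: mulr_ge0; first exact: ler0n.
  by apply: mulr_ge0; [exact: sqr_ge0 | exact: ltW].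
have [S0|Sn0] := eqVneq S' 0.
  rewrite S0 invr0; split => //.
  by apply: big1 => i _; rewrite mulr0 invr0 expr0n /= mul0r mulr0.
split.
  have -> : \sum_i (n i)%:R * ((sg i * S')^-1 ^+ 2 * sg i) = \sum_i (n i)%:R / sg i * S'^-2.
    apply: eq_bigr => i _; by field; apply/andP.
  rewrite -mulr_suml -/S'; by field.
rewrite -subr_ge0.
set c := S'^-1.
have -> : \sum_i (n i)%:R * (lambda i ^+ 2 * sg i) - c =
   \sum_i (n i)%:R * sg i * (lambda i - c / sg i) ^+ 2.
  have -> : \sum_i (n i)%:R * sg i * (lambda i - c / sg i) ^+ 2 =
     \sum_i ((n i)%:R * (lambda i ^+ 2 * sg i) - 2 * c * (lambda i * (n i)%:R) + c ^+ 2 * ((n i)%:R / sg i)).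
    apply: eq_bigr => i _; by field.
  rewrite big_split sumrB /= -!mulr_sumr Hsum -/S' /c; by field.
apply: sumr_ge0 => i _; apply: mulr_ge0; last exact: sqr_ge0.
by apply: mulr_ge0; [exact: ler0n | exact: ltW].
Qed.

Theorem theorem6p4 (R : realFieldType) (X Y : finType)
  (P : X -> R) (delta : X -> Y -> R) (pibar : X -> Y -> R)
  (m : nat) (pis : 'I_m -> X -> Y -> R) (n : 'I_m -> nat) :
  is_distr P ->
  is_policy pibar ->
  (forall i, is_policy (pis i)) ->
  (forall i, has_support delta (pis i) pibar) ->
  (forall i, 0 < divergence P delta pibar (pis i)) ->
  forall lambda : 'I_m -> R,
    (forall i, 0 <= lambda i) ->
    \sum_(i < m) lambda i * (n i)%:R = 1 ->
    @data_Var R X Y P m n pis (U_lambda delta pibar pis (lambda_star P delta pibar n pis))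
      = (\sum_(i < m) ((n i)%:R / divergence P delta pibar (pis i)))^-1 /\
    (\sum_(i < m) ((n i)%:R / divergence P delta pibar (pis i)))^-1
      <= @data_Var R X Y P m n pis (U_lambda delta pibar pis lambda).
Proof.
move=> HP _ Hpol _ Hdiv lambda _ Hsum.
rewrite !var_formula // /lambda_star.
exact: (@alg _ _ _ (fun i => divergence P delta pibar (pis i)) lambda Hdiv Hsum).
Qed.
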